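(* Let $F_\epsilon$ be a smooth near-identity family of maps on a domain $D\subset\mathbb R^m$ which is reversible with a linear reversor $R$, i.e. $R:\mathbb R^m\to\mathbb R^m$ is linear with $R\circ R=\mathrm I$ and $F_\epsilon^{-1}=R\circ F_\epsilon\circ R$. Then the interpolating vector field $X_n$ of $F_\epsilon$ is reversible: $X_n(Rx,\epsilon)=-R\,X_n(x,\epsilon)$ (whenever both sides are defined).
   Context: For $\epsilon\neq0$ and a point $x$ whose iterates $x_k=F_\epsilon^k(x)$, $|k|\le n$, are defined (negative $k$ meaning iterates of $F_\epsilon^{-1}$), the interpolating vector field is $$X_n(x,\epsilon)=\epsilon^{-1}\sum_{k=1}^n p_{nk}\bigl(x_k-x_{-k}\bigr),\qquad p_{nk}=\frac{(-1)^{k+1}(n!)^2}{k(n+k)!(n-k)!}.$$ *)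

(* Defs.v *)
From HB Require Import structures.
From mathcomp Require Import all_boot all_order all_algebra.
From mathcomp Require Import reals.
Set Implicit Arguments. Unset Strict Implicit. Unset Printing Implicit Defensive.
Import Order.TTheory GRing.Theory Num.Theory.
Local Open Scope ring_scope.

(* Points of R^m are row vectors 'rV[R]_m; a linear map R^m -> R^m is a
   matrix A acting by x |-> x *m A. *)

Definition pcoef (R : realType) (n k : nat) : R :=
  (-1) ^+ k.+1 * (n`!)%:R ^+ 2 / (k%:R * ((n + k)`!)%:R * ((n - k)`!)%:R).

(* The iterates x_k = F^k x (k >= 0) and x_{-k} = (F^{-1})^k x are all
   defined for |k| <= n : each iterate used as an argument lies in the
   domain of the map being applied. *)
Definition iterates_defined (V : Type) (D Dinv : V -> Prop) (f finv : V -> V)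
  (n : nat) (x : V) : Prop :=
  forall k, (k < n)%N -> D (iter k f x) /\ Dinv (iter k finv x).

Definition interp_field (R : realType) (m : nat) (f finv : 'rV[R]_m -> 'rV[R]_m)
  (n : nat) (eps : R) (x : 'rV[R]_m) : 'rV[R]_m :=
  eps^-1 *: \sum_(1 <= k < n.+1) pcoef R n k *: (iter k f x - iter k finv x).

(* Main.v *)
Require Import Defs.
From HB Require Import structures.
From mathcomp Require Import all_boot all_order all_algebra.
From mathcomp Require Import reals.
Import Order.TTheory GRing.Theory Num.Theory.
Local Open Scope ring_scope.

(* F eps : the map F_eps, defined on the domain D; Finv eps : its inverse
   F_eps^{-1}, defined on F_eps(D); E : the set of parameter values of the
   family; Rm : the linear reversor (acting as x |-> x *m Rm). *)
Theorem mainTheorem6 (R : realType) (m : nat) (D : 'rV[R]_m -> Prop)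
  (E : R -> Prop) (F Finv : R -> 'rV[R]_m -> 'rV[R]_m) (Rm : 'M[R]_m)
  (* Finv eps is the inverse of F eps : D -> F eps (D) *)
  (hinv1 : forall eps x, E eps -> D x -> Finv eps (F eps x) = x)
  (hinv2 : forall eps y, E eps -> (exists2 x, D x & F eps x = y) ->
             D (Finv eps y) /\ F eps (Finv eps y) = y)
  (* R is an involution *)
  (hRR : Rm *m Rm = 1%:M)
  (* reversibility F_eps^{-1} = R o F_eps o R, as partial maps: equal domains
     and equal values *)
  (hrevdom : forall eps y, E eps ->
     ((exists2 x, D x & F eps x = y) <-> D (y *m Rm)))
  (hrev : forall eps y, E eps -> (exists2 x, D x & F eps x = y) ->
     Finv eps y = F eps (y *m Rm) *m Rm)
  (n : nat) (eps : R) (x : 'rV[R]_m) :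
  E eps -> eps != 0 ->
  iterates_defined D (fun y => exists2 z, D z & F eps z = y)
    (F eps) (Finv eps) n x ->
  iterates_defined D (fun y => exists2 z, D z & F eps z = y)
    (F eps) (Finv eps) n (x *m Rm) ->
  interp_field (F eps) (Finv eps) n eps (x *m Rm)
    = - (interp_field (F eps) (Finv eps) n eps x *m Rm).
Proof.
move=> Ee _ hx hxR.
set f := F eps; set g := Finv eps.
have RR y : y *m Rm *m Rm = y by rewrite -mulmxA hRR mulmx1.
have L1 y : D (y *m Rm) -> f (y *m Rm) = g y *m Rm.
  move=> Dy; have Im : exists2 x, D x & F eps x = y by apply/(hrevdom eps y Ee).
  by rewrite /g (hrev eps y Ee Im) RR.
have L2 y : D y -> g (y *m Rm) = f y *m Rm.
  move=> Dy; have Im : exists2 x, D x & F eps x = y *m Rm.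
    by apply/(hrevdom eps _ Ee); rewrite RR.
  by rewrite /g (hrev eps _ Ee Im) RR.
have K : forall k, (k <= n)%N ->
  iter k f (x *m Rm) = iter k g x *m Rm /\ iter k g (x *m Rm) = iter k f x *m Rm.
  elim=> [|k IH] hk //=.
  have hk' : (k < n)%N by [].
  have [IH1 IH2] := IH (ltnW hk').
  have [D1 _] := hxR k hk'; have [D2 _] := hx k hk'.
  split.
    by rewrite IH1 L1 // -IH1.
  by rewrite IH2 L2.
rewrite /interp_field -scalemxAl -scalerN; congr (_ *: _).
rewrite mulmx_suml -sumrN; apply: eq_big_nat => k /andP[_ hk].
have [K1 K2] := K k hk.
by rewrite K1 K2 -scalemxAl -scalerN mulmxBl opprB.
Qed.
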